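(* Let $n \ge 3$. Then \[\det'(Q_n) = \begin{cases} \lceil \log_2 n \rceil + 1, & \text{if } n - \lceil \log_2 n \rceil > 2^{\lceil \log_2 n \rceil - 1},\\ \lceil \log_2 n \rceil, & \text{otherwise.}\end{cases}\]
   Context: $Q_n$ is the $n$-dimensional hypercube: its vertices are the binary strings of length $n$, two being adjacent iff they differ in exactly one bit. For a graph $G$ with at most one isolated vertex and no component isomorphic to $K_2$, an edge subset $T$ is an edge determining set if the only automorphism $\phi$ of $G$ satisfying $\{\phi(u),\phi(v)\}=\{u,v\}$ for all $\{u,v\}\in T$ is the identity; the determining index $\det'(G)$ is the minimum size of an edge determining set. *)

(* Defs.v *)
From mathcomp Require Import all_boot all_fingroup.
Set Implicit Arguments. Unset Strict Implicit. Unset Printing Implicit Defensive.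

Definition hvert (n : nat) : finType := {ffun 'I_n -> bool}.

Definition hadj (n : nat) (u v : hvert n) : bool := #|[set i | u i != v i]| == 1.

Definition hedges (n : nat) : {set {set hvert n}} :=
  [set [set p.1; p.2] | p in [set p : hvert n * hvert n | hadj p.1 p.2]].

Definition hauto (n : nat) (phi : {perm hvert n}) : Prop :=
  forall u v : hvert n, hadj (phi u) (phi v) = hadj u v.

Definition edge_determining (n : nat) (T : {set {set hvert n}}) : Prop :=
  T \subset hedges n /\
  forall phi : {perm hvert n}, hauto phi ->
    (forall e, e \in T -> phi @: e = e) -> phi = 1%g.

Definition det_index (n : nat) (k : nat) : Prop :=
  (exists T : {set {set hvert n}}, edge_determining T /\ #|T| = k) /\
  (forall T : {set {set hvert n}}, edge_determining T -> k <= #|T|).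

(* Main.v *)
Require Import Defs.
From mathcomp Require Import all_boot all_fingroup zify.

Lemma arith (n : nat) : 3 <= n ->
  let L := up_log 2 n in
  let K := (if 2 ^ L.-1 < n - L then L.+1 else L) in
  [/\ 2 <= K, K <= n, n - K <= 2 ^ K.-1 &
     forall k, 2 <= k -> k < K -> 2 ^ k.-1 < n - k].
Proof.
move=> n3 L K.
have h1 : 2 ^ L.-1 < n by apply: up_log_gtn; lia.
have h2 : n <= 2 ^ L by apply: up_logP.
have hL2 : 2 <= L.
  case E: L => [|[|l]] //; rewrite E /= in h1 h2; lia.
have hLn : L <= n.-1.
  apply: up_log_min => //. have := ltn_expl n.-1 (isT : 1 < 2). lia.
set P := 2 ^ L.-2.
have hP : 2 ^ L.-1 = 2 * P.
  by rewrite /P -expnS; congr (2 ^ _); lia.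
have hP2 : L.-2 < P by apply: ltn_expl.
split.
- rewrite /K; case: ifP; lia.
- rewrite /K; case: ifP; lia.
- rewrite /K; case: ifP => H; last lia.
  by rewrite /=; lia.
- move=> k k2 kK.
  have [kL|kL] := ltnP k L.
    have : 2 ^ k.-1 <= P by rewrite /P leq_exp2l //; lia.
    lia.
  have kLe : k = L by move: kK; rewrite /K; case: ifP; lia.
  move: kK; rewrite /K; case: ifP; last lia.
  by rewrite kLe.
Qed.

Set Implicit Arguments. Unset Strict Implicit.

Section G.
Variable n : nat.
Local Notation V := (hvert n).

Definition flip (r : 'I_n) (x : V) : V := [ffun c => x c (+) (c == r)].
Definition z0 : V := [ffun => false].

Lemma flipK r : involutive (flip r).
Proof. by move=> x; apply/ffunP => c; rewrite !ffunE addbK. Qed.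

Lemma adjP u v : hadj u v -> exists r, v = flip r u.
Proof.
rewrite /hadj => /cards1P [r Hr]; exists r; apply/ffunP => c.
have : (c \in [set i | u i != v i]) = (c \in [set r]) by rewrite Hr.
 rewrite !inE ffunE.
by case: (c == r); case: (u c); case: (v c).
Qed.

Lemma flip_adj u r : hadj u (flip r u).
Proof.
rewrite /hadj; apply/cards1P; exists r; apply/setP => c.
by rewrite !inE ffunE; case: (u c); case: (c == r).
Qed.

Definition Dp (e : {set V}) (c : 'I_n) : bool :=
  [exists p in e, exists q in e, p c != q c].

Lemma Dp_edge u r c : Dp [set u; flip r u] c = (c == r).
Proof.
apply/existsP/idP.
- move=> [p /andP[]]; rewrite !inE => /orP[]/eqP-> /existsP[q /andP[]];
   rewrite !inE => /orP[]/eqP->; rewrite ?ffunE;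
   by case: (u c); case: (c == r).
- move=> cr; exists u; rewrite !inE eqxx /=; apply/existsP; exists (flip r u).
  by rewrite !inE eqxx orbT ffunE cr addbT; case: (u c).
Qed.

Lemma hedgesP e : e \in hedges n -> exists u r, e = [set u; flip r u].
Proof.
move=> /imsetP [[u v]]; rewrite inE /= => /adjP [r ->] ->.
by exists u, r.
Qed.

Lemma edge_in u r : [set u; flip r u] \in hedges n.
Proof.
apply/imsetP; exists (u, flip r u) => //; rewrite inE /=; exact: flip_adj.
Qed.

Definition aff (s : {perm 'I_n}) (a : V) (x : V) : V := [ffun c => x (s c) (+) a c].

Lemma aff_inj s a : injective (aff s a).
Proof.
move=> x y /ffunP H; apply/ffunP => c.
have := H (s^-1 c)%g; rewrite !ffunE permKV; by move/addIb.
Qed.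

Definition affp s a : {perm V} := perm (@aff_inj s a).

Lemma affpE s a x : affp s a x = aff s a x.
Proof. by rewrite permE. Qed.

Lemma affp_auto s a : hauto (affp s a).
Proof.
move=> u v; rewrite !affpE /hadj.
have -> : [set i | aff s a u i != aff s a v i] = s @^-1: [set i | u i != v i].
  by apply/setP => c; rewrite !inE !ffunE; case: (a c); case: (u (s c)); case: (v (s c)).
by rewrite card_preimset //; exact: perm_inj.
Qed.

End G.


Section S.
Variable n : nat.
Local Notation V := (hvert n).

Lemma CN (p X : V) i j : i != j -> hadj p (flip i X) -> hadj p (flip j X) ->
  p = X \/ p = flip i (flip j X).
Proof.
move=> ij /adjP [r Hr] /adjP [s Hs].
have Ei : X = flip i (flip r p) by rewrite -Hr flipK.
have Ej : X = flip j (flip s p) by rewrite -Hs flipK.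
have E := Ej; rewrite Ei in E.
have F c : (c == r) (+) (c == i) = (c == s) (+) (c == j).
  have : flip i (flip r p) c = flip j (flip s p) c by rewrite E.
  rewrite !ffunE.
  by case: (p c) (c == r) (c == i) (c == s) (c == j) => [] [] [] [] [].
have ri : r = i \/ r = j.
  case: (eqVneq r i) => [->|ri]; first by left.
  right; have Fi := F i; have Fr := F r.
  rewrite eqxx (negbTE ij) (eq_sym i r) (negbTE ri) addbF /= in Fi.
  move/esym/eqP: Fi => is_; rewrite -is_ eqxx (negbTE ri) /= in Fr.
  by apply/eqP; rewrite -Fr.
case: ri => Er; rewrite Er in Ei.
- by left; rewrite Ei flipK.
- right; rewrite Ei; apply/ffunP => c; rewrite !ffunE; by case: (p c) (c == i) (c == j) => [] [] [].
Qed.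


Definition weight (x : V) := #|[set c | x c]|.

Section Str.
Variable phi : {perm V}.
Hypothesis Hphi : hauto phi.

Let a := phi (z0 n).
Definition tau (i : 'I_n) : 'I_n := odflt i [pick c | phi (flip i (z0 n)) c != a c].

Lemma tauE i : phi (flip i (z0 n)) = flip (tau i) a.
Proof.
have : hadj a (phi (flip i (z0 n))) by rewrite /a Hphi flip_adj.
move=> /adjP [r Hr]; rewrite Hr; congr flip.
rewrite /tau; case: pickP => [c|H] /=.
  by rewrite Hr ffunE; case: (a c); case: (eqVneq c r).
by have := H r; rewrite Hr ffunE eqxx; case: (a r).
Qed.

Lemma tau_inj : injective tau.
Proof.
move=> i j E.
have : flip i (z0 n) = flip j (z0 n) by apply: (@perm_inj _ phi); rewrite !tauE E.
move/ffunP => /(_ i); rewrite !ffunE eqxx /=; by move/esym/eqP.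
Qed.

Definition sgm : {perm 'I_n} := ((perm tau_inj)^-1)%g.

Lemma aff_flip i t : aff sgm a (flip i t) = flip (tau i) (aff sgm a t).
Proof.
apply/ffunP => c; rewrite !ffunE.
have -> : (sgm c == i) = (c == tau i).
  by rewrite /sgm (can2_eq (permKV _) (permK _)) permE.
by case: (t (sgm c)) (a c) (c == tau i) => [] [] [].
Qed.

Lemma aff_z0 : aff sgm a (z0 n) = a.
Proof. by apply/ffunP => c; rewrite !ffunE. Qed.

Lemma flip_weight i (x : V) : x i -> weight (flip i x) < weight x.
Proof.
move=> xi; rewrite /weight (cardsD1 i [set c | x c]) inE xi add1n ltnS.
apply: subset_leq_card; apply/subsetP => c; rewrite !inE ffunE.
by case: (eqVneq c i) => [->|ci]; rewrite ?xi ?addbF ?addbT.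
Qed.

Lemma structure x : phi x = aff sgm a x.
Proof.
move: {2}(weight x) (leqnn (weight x)) => m; elim: m x => [|m IH] x.
  rewrite leqn0 => /eqP /cards0_eq H.
  have -> : x = z0 n.
    apply/ffunP => c; rewrite ffunE; apply/negbTE.
    have : c \notin [set c | x c] by rewrite H inE.
    by rewrite inE.
  by rewrite aff_z0.
move=> wx.
case: (leqP (weight x) 1) => w1.
  case: (eqVneq (weight x) 0) => [w0|w0]; first by apply: IH; rewrite w0.
  have /cards1P [r Hr] : weight x == 1 by rewrite eqn_leq w1 lt0n w0.
  have -> : x = flip r (z0 n).
    apply/ffunP => c; rewrite !ffunE /=.
    have : (c \in [set c | x c]) = (c \in [set r]) by rewrite Hr.
    by rewrite !inE.
  by rewrite tauE aff_flip aff_z0.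
have := w1; rewrite /weight => /card_gt1P [i [j [xi xj ij]]].
rewrite inE in xi; rewrite inE in xj.
have wy : weight (flip i x) <= m by have := flip_weight xi; lia.
have wz : weight (flip j x) <= m by have := flip_weight xj; lia.
have ww : weight (flip i (flip j x)) <= m.
  have : flip j x i by rewrite ffunE (negbTE ij) addbF.
  move/flip_weight; have := flip_weight xj; lia.
have tij : tau i != tau j by apply: contra ij => /eqP /tau_inj ->.
have Hy : hadj (phi x) (flip (tau i) (aff sgm a x)).
  by rewrite -aff_flip -IH // Hphi flip_adj.
have Hz : hadj (phi x) (flip (tau j) (aff sgm a x)).
  by rewrite -aff_flip -IH // Hphi flip_adj.
case: (CN tij Hy Hz) => // E.
have : phi x = phi (flip i (flip j x)) by rewrite E IH // !aff_flip.
move/perm_inj/ffunP/(_ i); rewrite !ffunE eqxx (negbTE ij) /=.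
by case: (x i).
Qed.

End Str.
End S.


Fixpoint bitn (i m : nat) : bool := if i is i'.+1 then bitn i' m./2 else odd m.

Lemma bitn_inj b m m' : m < 2 ^ b -> m' < 2 ^ b ->
  (forall i, i < b -> bitn i m = bitn i m') -> m = m'.
Proof.
elim: b m m' => [|b IH] m m'; first by rewrite expn0; case: m; case: m'.
rewrite expnS mul2n -!ltn_half_double => hm hm' H.
have h0 := H 0 isT.
have : m./2 = m'./2 by apply: IH => // i ib; exact: (H i.+1).
move=> E; rewrite -(odd_double_half m) -(odd_double_half m') E.
by rewrite /= in h0; rewrite h0.
Qed.

Section U.
Variable n : nat.
Local Notation V := (hvert n).

Lemma edge_fix (phi : {perm V}) s a u j :
  (forall x, phi x = aff s a x) ->
  phi @: [set u; flip j u] = [set u; flip j u] ->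
  (forall c, (s c == j) = (c == j)) /\ (forall c, c != j -> u (s c) (+) a c = u c).
Proof.
move=> Hs He.
have mu : phi u \in [set u; flip j u] by rewrite -He imset_f // !inE eqxx.
have mv : phi (flip j u) \in [set u; flip j u] by rewrite -He imset_f // !inE eqxx orbT.
have nuv : u != flip j u.
  by apply/eqP => /ffunP /(_ j); rewrite ffunE eqxx; case: (u j).
have nphi : phi u != phi (flip j u) by rewrite (inj_eq (@perm_inj _ phi)).
have [[e1 e2]|[e1 e2]] : (phi u = u /\ phi (flip j u) = flip j u) \/
                         (phi u = flip j u /\ phi (flip j u) = u).
  move: mu mv nphi; rewrite !inE => /orP[]/eqP-> /orP[]/eqP->; rewrite ?eqxx //; by auto.
- rewrite !Hs in e1 e2; split => c.
  + move/ffunP/(_ c): e1; move/ffunP/(_ c): e2; rewrite !ffunE.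
    by case: (u (s c)) (a c) (u c) (s c == j) (c == j) => [] [] [] [] [].
  + move=> cj; move/ffunP/(_ c): e1; by rewrite !ffunE.
- rewrite !Hs in e1 e2; split => c.
  + move/ffunP/(_ c): e1; move/ffunP/(_ c): e2; rewrite !ffunE.
    by case: (u (s c)) (a c) (u c) (s c == j) (c == j) => [] [] [] [] [].
  + move=> cj; move/ffunP/(_ c): e1; by rewrite !ffunE (negbTE cj) addbF.
Qed.

End U.

Section Up.
Variables n k : nat.
Hypotheses (hk2 : 2 <= k) (hkn : k <= n) (hb : n - k <= 2 ^ k.-1).
Local Notation V := (hvert n).

Definition uvec (j : nat) : V := [ffun c : 'I_n => (k <= c) && (j != 0) && bitn j.-1 (c - k)].
Definition E (j : 'I_n) : {set V} := [set uvec j; flip j (uvec j)].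

Lemma E_inj : injective E.
Proof.
move=> i j H; have := Dp_edge (uvec i) i i; rewrite /E in H.
by rewrite H Dp_edge eqxx => /eqP.
Qed.

Lemma upper (phi : {perm V}) : hauto phi ->
  (forall j : 'I_n, j < k -> phi @: E j = E j) -> phi = 1%g.
Proof.
move=> Hphi Hfix.
move: (structure Hphi); move: (sgm Hphi) (phi (z0 n)) => s a Hs.
have F (j : 'I_n) : j < k -> (forall c, (s c == j) = (c == j)) /\
            (forall c, c != j -> uvec j (s c) (+) a c = uvec j c).
  by move=> jk; apply: (edge_fix Hs); apply: Hfix.
have slo (c : 'I_n) : c < k -> s c = c.
  by move=> ck; have [F1 _] := F c ck; apply/eqP; rewrite F1.
have n0 : 0 < n by lia.
have n1 : 1 < n by lia.
pose j0 : 'I_n := Ordinal n0.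
pose j1 : 'I_n := Ordinal n1.
have alo (c : 'I_n) : c < k -> a c = false.
  move=> ck.
  have [j [jk jc]] : exists j : 'I_n, j < k /\ c != j.
    case: (eqVneq c j0) => [->|cj]; last by exists j0; split => //=; lia.
    by exists j1; split => //=; lia.
  have [_ F2] := F j jk; have := F2 c jc; rewrite slo //.
  by case: (uvec j c) (a c) => [] [].
have shi (c : 'I_n) : k <= c -> k <= s c.
  move=> kc; rewrite leqNgt; apply/negP => sck.
  have [F1 _] := F (s c) sck; have := F1 c; rewrite eqxx => /esym/eqP cs.
  by move: kc; rewrite {1}cs; lia.
have ahi (c : 'I_n) : k <= c -> a c = false.
  move=> kc; have [_ F2] := F j0 (ltn_trans (isT : 0 < 1) (leq_trans (isT : 1 < 2) hk2)).
  have cj : c != j0 by apply/eqP => cj; move: kc; rewrite cj /=; lia.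
  by have := F2 c cj; rewrite !ffunE /j0 /= !andbF; case: (a c).
have shi2 (c : 'I_n) : k <= c -> s c = c.
  move=> kc; apply: val_inj => /=.
  have skc := shi c kc.
  suff : s c - k = c - k by lia.
  apply: (@bitn_inj k.-1); [have := ltn_ord (s c); lia | have := ltn_ord c; lia |].
  move=> i ik.
  have ij : i.+1 < n by lia.
  have [_ F2] := F (Ordinal ij) (ltac:(simpl; lia)).
  have cj : c != Ordinal ij by apply/eqP => cj; move: kc; rewrite cj /=; lia.
  by have := F2 c cj; rewrite !ffunE ahi // addbF /= skc kc.
apply/permP => x; rewrite perm1 Hs; apply/ffunP => c; rewrite ffunE.
case: (ltnP c k) => ck; first by rewrite slo // alo // addbF.
by rewrite shi2 // ahi // addbF.
Qed.

Definition Tset : {set {set V}} := [set E (widen_ord hkn j) | j : 'I_k].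

Lemma Tset_card : #|Tset| = k.
Proof.
rewrite card_imset ?card_ord // => i j /E_inj /(congr1 val) /= H; exact: val_inj.
Qed.

Lemma Tset_det : edge_determining Tset.
Proof.
split.
  apply/subsetP => e /imsetP [j _ ->]; exact: edge_in.
move=> phi Hphi Hfix; apply: upper => // j jk; apply: Hfix.
apply/imsetP; exists (Ordinal jk) => //; congr E; exact: val_inj.
Qed.

End Up.


Section Low.
Variable n : nat.
Hypothesis n0 : 0 < n.
Local Notation V := (hvert n).

Lemma imset2_eq (f : V -> V) u v : f @: [set u; v] = [set f u; f v].
Proof. by rewrite imsetU1 imset_set1. Qed.

Lemma lower (T : {set {set V}}) : edge_determining T ->
  2 <= #|T| /\ n - #|T| <= 2 ^ (#|T|).-1.
Proof.
move=> [Tsub Tdet].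
have Tedge e : e \in T -> exists u r, e = [set u; flip r u].
  by move=> eT; apply: hedgesP; apply: (subsetP Tsub).
pose c0 : 'I_n := Ordinal n0.
pose I := [set c | [exists e in T, Dp e c]].
pose dir (e : {set V}) := odflt c0 [pick c | Dp e c].
have IT : #|I| <= #|T|.
  apply: leq_trans (leq_imset_card dir T); apply: subset_leq_card.
  apply/subsetP => c; rewrite inE => /existsP [e /andP [eT De]].
  apply/imsetP; exists e => //.
  have [u [r Er]] := Tedge e eT; rewrite Er Dp_edge in De.
  rewrite /dir; case: pickP => [c' |H] /=.
    by rewrite Er Dp_edge (eqP De) => /eqP.
  by have := H r; rewrite Er Dp_edge eqxx.
case: (leqP #|I| 1) => I1.
  exfalso.
  pose i0 := odflt c0 [pick c in I].
  have Ii0 c : c \in I -> c = i0.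
    move=> cI; rewrite /i0; case: pickP => [c' c'I|H] /=.
      by move/card_le1_eqP: I1 => /(_ c c' cI c'I).
    by have := H c; rewrite cI.
  pose phi := affp 1%g (flip i0 (z0 n)).
  have phiE x : phi x = flip i0 x.
    by rewrite /phi affpE; apply/ffunP => d; rewrite !ffunE perm1 /=; case: (x d).
  have H1 : phi = 1%g.
    apply: Tdet; first exact: affp_auto.
    move=> e eT; have [u [r Er]] := Tedge e eT.
    have rI : r \in I by rewrite inE; apply/existsP; exists e; rewrite eT Er Dp_edge eqxx.
    rewrite Er imset2_eq !phiE (Ii0 r rI) flipK; apply/setP => w; rewrite !inE orbC //.
  have : phi (z0 n) = (1%g : {perm V}) (z0 n) by rewrite H1.
  by rewrite phiE perm1 => /ffunP /(_ i0); rewrite !ffunE eqxx.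
split; first by lia.
have /card_gt0P [e0 e0T] : 0 < #|T| by lia.
pose val (e : {set V}) (c : 'I_n) := [exists w in e, w c].
have valE e c w : e \in T -> c \notin I -> w \in e -> val e c = w c.
  move=> eT cI we; apply/existsP/idP => [[w' /andP [w'e w'c]]|wc]; last first.
    by exists w; rewrite we.
  apply/negPn/negP => wc; move: cI; rewrite inE => /negP; apply.
  apply/existsP; exists e; rewrite eT; apply/existsP; exists w; rewrite we.
  by apply/existsP; exists w'; rewrite w'e w'c (negbTE wc).
pose R c := [set e in T :\ e0 | val e c != val e0 c].
rewrite leqNgt; apply/negP => big.
have CI : #|~: I| = n - #|I| by rewrite cardsCs setCK card_ord.
have Rsub : (R @: (~: I)) \subset powerset (T :\ e0).
  apply/subsetP => A /imsetP [c _ ->]; rewrite powersetE.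
  by apply/subsetP => e; rewrite inE => /andP [].
have cardR : #|(R @: (~: I))| < #|~: I|.
  apply: leq_ltn_trans (subset_leq_card Rsub) _.
  rewrite card_powerset.
  have h2 : #|T| = (#|T :\ e0|).+1 by rewrite (cardsD1 e0 T) e0T.
  have -> : #|T :\ e0| = (#|T|).-1 by rewrite h2.
  rewrite CI; lia.
have : ~~ dinjectiveb R (~: I).
  apply/negP => /dinjectiveP /card_in_imset; lia.
move=> /dinjectivePn [c cI [c' /andP [cc' c'I] Rcc']].
rewrite inE in cI; rewrite /= in c'I; rewrite inE in c'I.
pose b := val e0 c (+) val e0 c'.
have Hb e : e \in T -> val e c (+) val e c' = b.
  move=> eT; case: (eqVneq e e0) => [->//|ee0].
  have : (e \in R c) = (e \in R c') by rewrite Rcc'.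
  rewrite !inE ee0 eT /= /b.
  by case: (val e c) (val e c') (val e0 c) (val e0 c') => [] [] [] [].
pose a : V := [ffun d => ((d == c) || (d == c')) && b].
pose phi := affp (tperm c c') a.
have phifix e w : e \in T -> w \in e -> phi w = w.
  move=> eT we; rewrite /phi affpE; apply/ffunP => d; rewrite !ffunE.
  have := Hb e eT; rewrite (valE e c w) // (valE e c' w) // => hb.
  case: (eqVneq d c) => [->|dc].
    by rewrite tpermL /= -hb; case: (w c) (w c') => [] [].
  case: (eqVneq d c') => [->|dc'].
    by rewrite tpermR ?eqxx ?orbT /= -hb; case: (w c) (w c') => [] [].
  by rewrite tpermD 1?eq_sym // /= addbF.
have H1 : phi = 1%g.
  apply: Tdet; first exact: affp_auto.
  move=> e eT; rewrite -[RHS]imset_id; apply: eq_in_imset => w we.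
  exact: phifix eT we.
pose x : V := [ffun d => (d == c) && ~~ b].
have : phi x = (1%g : {perm V}) x by rewrite H1.
rewrite perm1 /phi affpE => /ffunP /(_ c); rewrite !ffunE tpermL eqxx /=.
rewrite (negbTE cc') /=.
by case: (b).
Qed.
End Low.

Theorem theorem11 (n : nat) : 3 <= n ->
  det_index n (if 2 ^ (up_log 2 n).-1 < n - up_log 2 n
               then (up_log 2 n).+1 else up_log 2 n).
Proof.
move=> n3; have [h2 hKn hb hlt] := arith n n3.
split.
  by exists (Tset hKn); split; [exact: (Tset_det h2 hKn hb) | exact: Tset_card].
move=> T HT; have n0 : 0 < n by lia.
have [T2 Tb] := lower n0 HT.
rewrite leqNgt; apply/negP => lt; have := hlt _ T2 lt; lia.
Qed.
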